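(* Let $p\ge2$ and $c\ge2$ be integers such that $(p-2)/(c-1)$ is a positive integer, let $d=2^{p-1}$, assume $d\ge 8c(c-1)$, and let $\mu$ be as in the context. Suppose a distribution $\mathcal{D}$ over pairs $(\mathrm{sk},\mathrm{Alg})$ with space complexity $s$ $(1/8,\delta)$-succeeds for Certification, where $\delta\le 1/d$. Then there exist positive integers $k,t$ with $k\ge (d/2)^{1/(c-1)}$ and $kt\le d/2$, and a public-coin one-way protocol $\Pi$ of communication complexity $s$ that $(1/(8c),\delta)$-succeeds for $\textsc{Random-Multi-Index}(k,t)$ on strings of length $d$.
   Context: Let $d=2^{p-1}$. The distribution $\zeta$: sample a uniformly random subset $J_0\subset[d]$ of size $2^{p-2}$; for $i=1,\dots,c-1$, sample $J_i$ uniformly at random among subsets of $J_{i-1}$ of size $2^{-(p-2)/(c-1)}|J_{i-1}|$. Let $x^{(i)}\in\{0,1\}^d$ be the indicator vector of $J_i$, and let $\zeta$ be the distribution of $(x^{(0)},\dots,x^{(c-1)})$. The distribution $\mu$ is the distribution of $\sum_{i=0}^{c-1}x^{(i)}\in\{0,\dots,c\}^d$. The Certification problem: a distribution $\mathcal{D}$ over pairs $(\mathrm{sk},\mathrm{Alg})$, where $\mathrm{sk}\colon\{0,\dots,c\}^{d}\to\{0,1\}^s$ ($s$ is the space complexity) and $\mathrm{Alg}$ takes two strings in $\{0,1\}^s$ and outputs either $\bot$ or a pair $(i,\ell)\in[d]\times[c-1]$. $\mathcal{D}$ $(\alpha,\delta)$-succeeds for Certification if (i) $\Pr_{X,Y\sim\mu,\,(\mathrm{sk},\mathrm{Alg})\sim\mathcal{D}}[\mathrm{Alg}(\mathrm{sk}(X),\mathrm{sk}(Y))\ne\bot]\ge\alpha$,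 with $X,Y$ independent draws from $\mu$; and (ii) for any two points $x,y$ in the support of $\mu$, $\Pr_{(\mathrm{sk},\mathrm{Alg})\sim\mathcal{D}}[\mathrm{Alg}(\mathrm{sk}(x),\mathrm{sk}(y))=(i,\ell)\text{ for some }(i,\ell)\text{ with }\neg(x_i<\ell<y_i)]\le\delta$. For $n\le d$, $S_d(n)$ is the set of vectors in $\{0,1\}^d$ with exactly $n$ ones, and $\mathcal{I}_d(n)$ is the set of subsets of $[d]$ of size exactly $n$. $\textsc{Random-Multi-Index}(k,t)$ on strings of length $d$ (for positive integers $k,t$ with $kt\le d/2$) is the public-coin one-way communication problem in which Alice receives a uniformly random $x\sim S_d(kt)$ and sends a message $m\in\{0,1\}^s$ to Bob ($s$ is the communication complexity); Bob receives an independent uniformly random $I\sim\mathcal{I}_d(t)$ and $m$, and outputs either $\bot$ or an index $i\in I$. A protocol $(\alpha,\delta)$-succeeds if, with probability over $x$, $I$ and the protocol's randomness, (i) Bob outputs an index $i\in I$ with probability at least $\alpha$, and (ii) Bob outputs an index $i\in I$ with $x_i=1$ with probability at most $\delta$. *)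

(* Defs.v *)
From HB Require Import structures.
From mathcomp Require Import all_boot all_order all_algebra.
From mathcomp Require Import reals exp.
Set Implicit Arguments. Unset Strict Implicit. Unset Printing Implicit Defensive.
Import Order.TTheory GRing.Theory Num.Theory.
Local Open Scope ring_scope.

Definition dimd (p : nat) : nat := (2 ^ (p - 1))%N.

Definition is_dist (R : realType) (T : finType) (P : T -> R) : Prop :=
  (forall t, 0 <= P t) /\ \sum_(t : T) P t = 1.

Fixpoint jsize (p c i : nat) : nat :=
  match i with
  | 0 => 2 ^ (p - 2)
  | i'.+1 => jsize p c i' %/ 2 ^ ((p - 2) %/ (c - 1))
  end%N.

Definition chain (p c : nat) := (c.-tuple {set 'I_(dimd p)})%type.

Definition Jc (p c : nat) (J : chain p c) (i : nat) : {set 'I_(dimd p)} :=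
  nth set0 J i.

Definition chain_ok (p c : nat) (J : chain p c) : bool :=
  (#|Jc J 0| == jsize p c 0)%N &&
  [forall i : 'I_c, (0 < i)%N ==>
     ((Jc J i \subset Jc J i.-1) && (#|Jc J i| == jsize p c i)%N)].

(* probability of the chain J under the sequential sampling defining zeta *)
Definition zeta (R : realType) (p c : nat) (J : chain p c) : R :=
  if chain_ok J then
    ('C(dimd p, jsize p c 0)%:R)^-1 *
    \prod_(1 <= i < c) ('C(jsize p c i.-1, jsize p c i)%:R)^-1
  else 0.

Definition point (p c : nat) := {ffun 'I_(dimd p) -> 'I_c.+1}.

Definition chain_sum (p c : nat) (J : chain p c) : point p c :=
  [ffun j => inord (\sum_(i < c) ((j \in Jc J i) : nat))%N].

Definition mu (R : realType) (p c : nat) (x : point p c) : R :=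
  \sum_(J : chain p c | chain_sum J == x) zeta R J.

Definition bits (s : nat) := {ffun 'I_s -> bool}.

(* output (i, l) with i in [d], l in [c-1] = {1,...,c-1}; l is encoded
   by an ordinal j : 'I_(c-1) with l = j + 1.  None encodes bottom. *)
Definition cert_out (p c : nat) := option ('I_(dimd p) * 'I_(c - 1)).

Definition cert_pair (p c s : nat) :=
  ({ffun point p c -> bits s} * {ffun (bits s * bits s) -> cert_out p c})%type.

Definition cert_run (p c s : nat) (A : cert_pair p c s) (x y : point p c)
  : cert_out p c := A.2 (A.1 x, A.1 y).

Definition cert_bad (p c s : nat) (A : cert_pair p c s) (x y : point p c) : bool :=
  if cert_run A x y is Some (i, j) then
    ~~ ((x i < (j : nat).+1)%N && ((j : nat).+1 < y i)%N)
  else false.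

Definition cert_succeeds (R : realType) (p c s : nat)
    (D : cert_pair p c s -> R) (alpha delta : R) : Prop :=
  is_dist D /\
  alpha <= \sum_(x : point p c) \sum_(y : point p c) \sum_(A : cert_pair p c s)
              mu R x * mu R y * D A * (cert_run A x y != None)%:R /\
  (forall x y : point p c, 0 < mu R x -> 0 < mu R y ->
     \sum_(A : cert_pair p c s) D A * (cert_bad A x y)%:R <= delta).

(* a deterministic one-way protocol: Alice's message function and Bob's
   output function; a public-coin protocol is a distribution over these. *)
Definition rmi_pair (d s : nat) :=
  ({ffun {ffun 'I_d -> bool} -> bits s} *
   {ffun ({set 'I_d} * bits s) -> option 'I_d})%type.

Definition rmi_out (d s : nat) (P : rmi_pair d s) (x : {ffun 'I_d -> bool})
  (I : {set 'I_d}) : option 'I_d := P.2 (I, P.1 x).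

Definition rmi_succeeds (R : realType) (d s k t : nat)
    (Pi : rmi_pair d s -> R) (alpha delta : R) : Prop :=
  is_dist Pi /\
  (forall P, 0 < Pi P -> forall I m,
      match P.2 (I, m) with Some i => i \in I | None => true end) /\
  alpha <= \sum_(x : {ffun 'I_d -> bool} | #|[set i | x i]| == (k * t)%N)
            \sum_(I : {set 'I_d} | #|I| == t) \sum_(P : rmi_pair d s)
              ('C(d, k * t)%:R)^-1 * ('C(d, t)%:R)^-1 * Pi P *
              (if rmi_out P x I is Some i then i \in I else false)%:R /\
  \sum_(x : {ffun 'I_d -> bool} | #|[set i | x i]| == (k * t)%N)
     \sum_(I : {set 'I_d} | #|I| == t) \sum_(P : rmi_pair d s)
       ('C(d, k * t)%:R)^-1 * ('C(d, t)%:R)^-1 * Pi P *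
       (if rmi_out P x I is Some i then (i \in I) && x i else false)%:R
     <= delta.

(* Main.v *)
Require Import Defs.
From HB Require Import structures.
From mathcomp Require Import all_boot all_order all_algebra.
From mathcomp Require Import reals exp.
From mathcomp Require Import perm ring lra zify.
Import Order.TTheory GRing.Theory Num.Theory.
Set Implicit Arguments. Unset Strict Implicit. Unset Printing Implicit Defensive.
Section Count.
Variable T : finType.

Fixpoint okseq (f : nat -> nat) (A : {set T}) (s : seq {set T}) : bool :=
  if s is B :: s' then [&& B \subset A, #|B| == f 0%N & okseq (fun i => f i.+1) B s']
  else true.

Fixpoint cnt (f : nat -> nat) (a n : nat) : nat :=
  if n is n'.+1 then ('C(a, f 0%N) * cnt (fun i => f i.+1) (f 0%N) n')%N else 1%N.

Lemma sum_tupleS (U : finType) n (F : n.+1.-tuple U -> nat) :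
  (\sum_(t : n.+1.-tuple U) F t = \sum_(x : U) \sum_(t : n.-tuple U) F [tuple of x :: t])%N.
Proof.
rewrite pair_big /=.
rewrite (reindex (fun u : U * n.-tuple U => [tuple of u.1 :: u.2])) //=.
exists (fun t : n.+1.-tuple U => (thead t, behead_tuple t)).
  by move=> [x t] _ /=; congr pair; apply: val_inj.
move=> t _; case/tupleP: t => x t /=; exact: val_inj.
Qed.

Lemma count_ok n : forall f (A : {set T}),
  (\sum_(t : n.-tuple {set T}) okseq f A t = cnt f #|A| n)%N.
Proof.
elim: n => [|n IH] f A /=.
  rewrite (big_pred1 [tuple]) // => t; symmetry; apply/eqP; exact: tuple0.
rewrite sum_tupleS.
rewrite (eq_bigr (fun x : {set T} => ((x \in [set B : {set T} | B \subset A & #|B| == f 0%N]) * cnt (fun i => f i.+1) (f 0%N) n)%N)); last first.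
  move=> x _; rewrite inE /=.
  case/boolP: (_ && _) => [/andP[HA /eqP Hx]|H].
    rewrite mul1n -Hx -IH; apply: eq_bigr => t _; by rewrite HA Hx eqxx.
  rewrite mul0n big1 // => t _; by case: (x \subset A) H => //=; case: (#|x| == f 0%N).
rewrite -big_distrl /= -cards_draws -sum1_card; congr (_ * _)%N; rewrite [RHS]big_mkcond; apply: eq_bigr => x _; by case: (x \in _).
Qed.

End Count.

Lemma cnt_prod (f : nat -> nat) a n :
  cnt f a n.+1 = ('C(a, f 0%N) * \prod_(1 <= i < n.+1) 'C(f i.-1, f i))%N.
Proof.
elim: n f a => [|n IH] f a; first by rewrite /= big_geq // !muln1.
change (cnt f a n.+2) with ((binomial a (f 0%N)) * cnt (fun i => f i.+1) (f 0%N) n.+1)%N.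
rewrite IH (big_nat_recl n.+1 1) //=.
congr (_ * (_ * _))%N.
by apply: eq_big_nat => i /andP[Hi _]; rewrite prednK.
Qed.

Lemma okseqP (T : finType) (s : seq {set T}) : forall f (A : {set T}),
  okseq f A s <-> (forall i, (i < size s)%N ->
     nth set0 s i \subset (if i is i'.+1 then nth set0 s i' else A) /\ #|nth set0 s i| = f i).
Proof.
elim: s => [|B s IH] f A /=; first by split => // _ i.
split.
  case/and3P=> HA /eqP HB /IH Hs [|i] /= Hi; first by [].
  by case: i Hi => [|i] Hi; exact: Hs.
move=> H; have [H0a H0b] := H 0%N isT.
apply/and3P; split => //; first by apply/eqP.
apply/IH => i Hi; case: i Hi => [|i] Hi; [exact: (H 1%N Hi) | exact: (H i.+2 Hi)].
Qed.

Section Chains.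
Variables (p c : nat).
Local Notation d := (dimd p).
Local Notation js := (jsize p c).

Lemma chain_okE (c0 : (0 < c)%N) (J : chain p c) : chain_ok J = okseq js setT J.
Proof.
apply/idP/idP.
  case/andP => /eqP H0 /forallP H.
  apply/okseqP => i; rewrite size_tuple => Hi.
  case: i Hi => [|i] Hi; first by rewrite subsetT; split.
  have := H (Ordinal Hi); rewrite /= => /andP[Hs /eqP Hc]; by split.
move/okseqP; rewrite size_tuple => H.
apply/andP; split; first by apply/eqP; exact: (H 0%N c0).2.
apply/forallP => -[[|i] Hi] //=; apply/andP; split; first by have := (H i.+1 Hi).1.
by apply/eqP; exact: (H i.+1 Hi).2.
Qed.

End Chains.

Section Zeta.
Variables (R : realType) (p c : nat).
Local Notation d := (dimd p).
Local Notation js := (jsize p c).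
Local Open Scope ring_scope.

Lemma js_le i : (js i.+1 <= js i)%N.
Proof. exact: leq_div. Qed.

Lemma js0_le : (js 0 <= d)%N.
Proof. rewrite /= /dimd leq_pexp2l //; lia. Qed.

Lemma zeta_ge0 (J : chain p c) : 0 <= zeta R J.
Proof.
rewrite /zeta; case: ifP => // _.
apply: mulr_ge0; first by rewrite invr_ge0 ler0n.
by apply: prodr_ge0 => i _; rewrite invr_ge0 ler0n.
Qed.

Lemma zeta_sum (c0 : (0 < c)%N) : \sum_(J : chain p c) zeta R J = 1.
Proof.
rewrite (eq_bigr (fun J : chain p c => (chain_ok J)%:R *
   (('C(d, js 0)%:R)^-1 * \prod_(1 <= i < c) ('C(js i.-1, js i)%:R)^-1) : R)); last first.
  by move=> J _; rewrite /zeta; case: ifP; rewrite ?mul1r ?mul0r.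
rewrite -big_distrl /= -natr_sum.
rewrite (eq_bigr (fun J : chain p c => okseq js setT J : nat)); last first.
  by move=> J _; rewrite chain_okE.
rewrite count_ok cardsT card_ord.
have H1 : forall i, (0 < i)%N -> (0 < 'C(js i.-1, js i))%N.
  by move=> i Hi; rewrite bin_gt0 -(prednK Hi) js_le.
have H0 : (0 < 'C(d, js 0))%N by rewrite bin_gt0 js0_le.
move: H0 H1; case: c c0 => // c' _ H0 H1.
rewrite cnt_prod natrM natr_prod prodfV.
rewrite mulrACA mulrV ?mulrV ?mulr1 //.
  rewrite unitfE prodf_seq_neq0; apply/allP => i /=; rewrite mem_index_iota => /andP[Hi _].
  by rewrite pnatr_eq0 -lt0n H1.
by rewrite unitfE pnatr_eq0 -lt0n.
Qed.

End Zeta.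

Lemma perm_exists (T : finType) (A B : {set T}) :
  #|A| = #|B| -> exists pi : {perm T}, pi @: A = B.
Proof.
move=> AB.
pose e := enum A ++ enum (~: A); pose e' := enum B ++ enum (~: B).
have ue : uniq e.
  rewrite cat_uniq !enum_uniq /= andbT; apply/hasPn => x; rewrite !mem_enum inE.
  by [].
have ue' : uniq e'.
  rewrite cat_uniq !enum_uniq /= andbT; apply/hasPn => x; rewrite !mem_enum inE.
  by [].
have me : forall x, x \in e.
  by move=> x; rewrite mem_cat !mem_enum inE; case: (x \in A).
have se : size e = #|T| by rewrite size_cat -!cardE cardsC.
have se' : size e' = #|T| by rewrite size_cat -!cardE cardsC.
pose g x := nth x e' (index x e).
have ginj : injective g.
  move=> x y; rewrite /g => Hxy.
  have ix : (index x e < size e')%N by rewrite se' -se index_mem.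
  have iy : (index y e < size e')%N by rewrite se' -se index_mem.
  move: Hxy; rewrite (set_nth_default x y iy) => /eqP.
  rewrite nth_uniq // => /eqP Hi.
  by rewrite -(nth_index x (me x)) Hi nth_index.
exists (perm ginj).
apply/eqP; rewrite eqEcard card_imset ?AB ?leqnn ?andbT; last exact: perm_inj.
apply/subsetP => y /imsetP[x Hx ->]; rewrite permE /g.
have Hi : (index x e < #|A|)%N by rewrite index_cat mem_enum Hx cardE index_mem mem_enum.
by rewrite nth_cat -cardE -AB Hi -mem_enum mem_nth // -cardE -AB.
Qed.

Section Sym.
Variables (R : realType) (p c : nat).
Local Notation d := (dimd p).
Local Notation js := (jsize p c).
Local Open Scope ring_scope.

Definition permc (pi : {perm 'I_d}) (J : chain p c) : chain p c :=
  map_tuple (fun A : {set 'I_d} => pi @: A) J.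

Lemma Jc_permc pi J i : Jc (permc pi J) i = pi @: Jc J i.
Proof.
rewrite /Jc /permc /=; case: (ltnP i (size J)) => Hi.
  by rewrite (nth_map set0).
by rewrite !nth_default ?imset0 // size_map.
Qed.

Lemma chain_ok_permc pi J : chain_ok J -> chain_ok (permc pi J).
Proof.
case/andP => H0 /forallP H; apply/andP; split.
  by rewrite Jc_permc card_imset //; exact: perm_inj.
apply/forallP => i; apply/implyP => Hi; have /implyP/(_ Hi)/andP[Hs Hc] := H i.
by rewrite !Jc_permc imsetS // card_imset //; exact: perm_inj.
Qed.

Lemma permcK pi : cancel (permc pi) (permc pi^-1).
Proof.
move=> J; apply: val_inj; rewrite /= -map_comp -[RHS]map_id; apply: eq_map => A /=.
by rewrite -imset_comp (eq_imset _ (permK pi)) imset_id.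
Qed.

Lemma zeta_permc pi J : zeta R (permc pi J) = zeta R J.
Proof.
rewrite /zeta; have -> // : chain_ok (permc pi J) = chain_ok J.
apply/idP/idP; last exact: chain_ok_permc.
by move/(chain_ok_permc pi^-1); rewrite permcK.
Qed.

Definition Zl (j : nat) (S : {set 'I_d}) : R :=
  \sum_(J : chain p c) zeta R J * (Jc J j == S)%:R.

Lemma Zl_perm j (pi : {perm 'I_d}) (S : {set 'I_d}) : Zl j (pi @: S) = Zl j S.
Proof.
rewrite /Zl (reindex_inj (can_inj (permcK pi))) /=.
apply: eq_bigr => J _; rewrite zeta_permc Jc_permc (inj_eq (imset_inj _)) //.
exact: perm_inj.
Qed.

Lemma Zl_const j (S S' : {set 'I_d}) : #|S| = #|S'| -> Zl j S = Zl j S'.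
Proof. by case/perm_exists => pi <-; rewrite Zl_perm. Qed.

Lemma chain_ok_card (J : chain p c) j : chain_ok J -> (j < c)%N -> #|Jc J j| = js j.
Proof.
case/andP => /eqP H0 /forallP H Hj; case: j Hj => [|j] Hj //.
by have /implyP/(_ isT)/andP[_ /eqP] := H (Ordinal Hj).
Qed.

Lemma chain_ok_sub (J : chain p c) a b : chain_ok J -> (a <= b)%N -> (b < c)%N -> Jc J b \subset Jc J a.
Proof.
move=> Hok; elim: b => [|b IH] Hab Hb; first by case: a Hab.
rewrite leq_eqVlt in Hab; case/orP: Hab => [/eqP -> //|Hab].
apply: subset_trans (IH Hab (ltnW Hb)).
case/andP: Hok => _ /forallP H.
by have /implyP/(_ isT)/andP[Hs _] := H (Ordinal Hb).
Qed.

Lemma Zl_val j (S : {set 'I_d}) : (0 < c)%N -> (j < c)%N -> #|S| = js j -> Zl j S * ('C(d, js j))%:R = 1.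
Proof.
move=> c0 jc HS.
have E : \sum_(S' : {set 'I_d} | #|S'| == js j) Zl j S' = Zl j S * ('C(d, js j))%:R.
  rewrite (eq_bigr (fun _ => Zl j S)); last by move=> S' /eqP HS'; apply: Zl_const; rewrite HS'.
  rewrite sumr_const mulr_natr; congr (_ *+ _).
  have := card_draws 'I_(dimd p) (js j); rewrite card_ord => <-; apply: eq_card => S'; by rewrite inE.
rewrite -E /Zl exchange_big /= -[RHS](zeta_sum R p c0); apply: eq_bigr => J _.
rewrite -big_distrr /=.
case/boolP: (chain_ok J) => Hok; last by rewrite /zeta (negbTE Hok) mul0r.
rewrite (bigD1 (Jc J j)) /=; last by rewrite chain_ok_card.
rewrite eqxx big1 ?addr0 ?mulr1 // => S' /andP[_ HS']; by rewrite eq_sym (negbTE HS').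
Qed.

End Sym.

Section Levels.
Variables (p c : nat).
Local Notation d := (dimd p).
Local Notation js := (jsize p c).

Lemma chain_sumE (J : chain p c) (i : 'I_d) :
  (chain_sum J i : nat) = (\sum_(i' < c) (i \in Jc J i'))%N.
Proof.
rewrite /chain_sum ffunE inordK // ltnS.
rewrite -[X in (_ <= X)%N](card_ord c) -sum1_card; apply: leq_sum => i' _; exact: leq_b1.
Qed.

Lemma lvl_ge (J : chain p c) j (i : 'I_d) :
  chain_ok J -> (j < c)%N -> i \in Jc J j -> (j.+1 <= chain_sum J i)%N.
Proof.
move=> Hok jc Hi; rewrite chain_sumE -(big_mkord xpredT (fun i' => (i \in Jc J i') : nat)).
rewrite (big_cat_nat _ (n := j.+1)) //=.
apply: leq_trans (leq_addr _ _).
have {1}-> : (j.+1 = \sum_(0 <= k < j.+1) 1)%N by rewrite sum_nat_const_nat subn0 muln1.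
rewrite !big_seq; apply: leq_sum => k; rewrite mem_index_iota => /andP[_ Hk].
by rewrite (subsetP (chain_ok_sub Hok _ jc) _ Hi).
Qed.

Lemma lvl_le (J : chain p c) j (i : 'I_d) :
  chain_ok J -> (j < c)%N -> i \notin Jc J j -> (chain_sum J i <= j)%N.
Proof.
move=> Hok jc Hi; rewrite chain_sumE -(big_mkord xpredT (fun i' => (i \in Jc J i') : nat)).
rewrite (big_cat_nat _ (n := j)) //=; last exact: ltnW.
rewrite [X in (_ + X)%N]big1_seq ?addn0 => [|k]; last first.
  rewrite /= mem_index_iota => /andP[Hk1 Hk2].
  apply/eqP; rewrite eqb0; apply: contra Hi => Hk; exact: (subsetP (chain_ok_sub Hok Hk1 Hk2)).
rewrite -[X in (_ <= X)%N](subn0 j) -[X in (_ <= X)%N]muln1 -sum_nat_const_nat.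
apply: leq_sum => k _; exact: leq_b1.
Qed.

End Levels.

Section Prob.
Variable R : realType.
Local Open Scope ring_scope.

Lemma pushf (A B : finType) (h : A -> B) (w : A -> R) (g : B -> R) :
  \sum_(b : B) (\sum_(a | h a == b) w a) * g b = \sum_(a : A) w a * g (h a).
Proof.
under eq_bigr => b _ do rewrite big_distrl /=.
rewrite (exchange_big_dep xpredT) //=; apply: eq_bigr => a _.
by rewrite (big_pred1 (h a)) // => b; rewrite eq_sym.
Qed.

Lemma marg (I J : finType) (w : I -> J -> R) (h : J -> R) (i0 : I) :
  (forall i, \sum_(j : J) w i j = 1) ->
  \sum_(f : {ffun I -> J}) (\prod_(i : I) w i (f i)) * h (f i0) = \sum_(j : J) w i0 j * h j.
Proof.
move=> Hw.
have -> : \sum_(j : J) w i0 j * h j =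
    \prod_(i : I) \sum_(j : J) (if i == i0 then w i j * h j else w i j).
  rewrite [RHS](bigD1 i0) //= [X in _ * X]big1 ?mulr1.
    by apply: eq_bigr => j _; rewrite eqxx.
  move=> i Hi; rewrite -(Hw i); apply: eq_bigr => j _; by rewrite (negbTE Hi).
rewrite bigA_distr_bigA /=; apply: eq_bigr => f _.
rewrite [RHS](bigD1 i0) //= eqxx [in LHS](bigD1 i0) //=.
rewrite mulrAC; congr (_ * _).
by apply: eq_bigr => i /negbTE ->.
Qed.

Lemma prodsum1 (I J : finType) (w : I -> J -> R) :
  (forall i, \sum_(j : J) w i j = 1) ->
  \sum_(f : {ffun I -> J}) \prod_(i : I) w i (f i) = 1.
Proof.
by move=> Hw; rewrite -bigA_distr_bigA /= big1 // => i _; rewrite Hw.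
Qed.

End Prob.

Section Main.
Variables (R : realType) (p c s l : nat).
Local Notation d := (dimd p).
Local Notation js := (jsize p c).
Local Open Scope ring_scope.

Lemma js_led i : (js i <= d)%N.
Proof. elim: i => [|i IH]; [exact: js0_le | exact: leq_trans (js_le _ _ _) IH]. Qed.

Definition J0 : chain p c := nseq_tuple c set0.

Definition wgt (j : nat) (S : {set 'I_d}) (J : chain p c) : R :=
  if #|S| == js j then zeta R J * (Jc J j == S)%:R * ('C(d, js j))%:R else (J == J0)%:R.

Lemma wgt_ge0 j S J : 0 <= wgt j S J.
Proof.
rewrite /wgt; case: ifP => _; last exact: ler0n.
by rewrite !mulr_ge0 ?ler0n ?zeta_ge0.
Qed.

Lemma wgt_sum j S : (0 < c)%N -> (j < c)%N -> \sum_J wgt j S J = 1.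
Proof.
move=> c0 jc; rewrite /wgt; case: (boolP (#|S| == js j)) => HS.
  by rewrite -big_distrl /= -[RHS](Zl_val R c0 jc (eqP HS)).
by rewrite (bigD1 J0) //= eqxx big1 ?addr0 // => J /negbTE ->.
Qed.

Definition coin := (cert_pair p c s * ({ffun {set 'I_d} -> chain p c} *
                    {ffun {set 'I_d} -> chain p c}))%type.

Definition cw (D : cert_pair p c s -> R) (co : coin) : R :=
  D co.1 * (\prod_S wgt l S (co.2.1 S)) * (\prod_S wgt l.+1 S (co.2.2 S)).

Definition bobout (A : cert_pair p c s) (JY : chain p c) (I : {set 'I_d}) (msg : bits s)
  : option 'I_d :=
  if A.2 (msg, A.1 (chain_sum JY)) is Some (i, j)
  then (if ((j : nat) == l) && (i \in I) then Some i else None) else None.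

Definition build (co : coin) : rmi_pair d s :=
  ([ffun x : {ffun 'I_d -> bool} => co.1.1 (chain_sum (co.2.1 [set i | x i]))],
   [ffun IM : {set 'I_d} * bits s => bobout co.1 (co.2.2 IM.1) IM.1 IM.2]).

Definition Pi (D : cert_pair p c s -> R) (P : rmi_pair d s) : R :=
  \sum_(co | build co == P) cw D co.

Lemma rmi_outE co x I : rmi_out (build co) x I =
  bobout co.1 (co.2.2 I) I (co.1.1 (chain_sum (co.2.1 [set i | x i]))).
Proof. by rewrite /rmi_out /= !ffunE. Qed.

Definition xof (J : chain p c) : {ffun 'I_d -> bool} := [ffun i => i \in Jc J l].

Lemma coin_sum D (G : cert_pair p c s -> chain p c -> chain p c -> R) Sx I :
  (0 < c)%N -> (l.+1 < c)%N ->
  \sum_(co : coin) cw D co * G co.1 (co.2.1 Sx) (co.2.2 I) =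
  \sum_A D A * \sum_JX \sum_JY wgt l Sx JX * wgt l.+1 I JY * G A JX JY.
Proof.
move=> c0 lc.
rewrite (eq_bigr (fun co : coin => (fun A ff => cw D (A, ff) * G A (ff.1 Sx) (ff.2 I)) co.1 co.2)); last by case.
rewrite -(pair_bigA _ (fun A ff => cw D (A, ff) * G A (ff.1 Sx) (ff.2 I))) /=.
apply: eq_bigr => A _.
rewrite (eq_bigr (fun ff => (fun FX FY => cw D (A, (FX, FY)) * G A (FX Sx) (FY I)) ff.1 ff.2)); last by case.
rewrite -(pair_bigA _ (fun FX FY => cw D (A, (FX, FY)) * G A (FX Sx) (FY I))) /=.
rewrite /cw /=.
have HY : forall FX : {ffun {set 'I_d} -> chain p c},
   \sum_(FY : {ffun {set 'I_d} -> chain p c}) D A * (\prod_S wgt l S (FX S)) * (\prod_S wgt l.+1 S (FY S)) * G A (FX Sx) (FY I)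
   = D A * ((\prod_S wgt l S (FX S)) * \sum_JY wgt l.+1 I JY * G A (FX Sx) JY).
  move=> FX; rewrite -(@marg R _ _ (fun S J => wgt l.+1 S J) (fun JY => G A (FX Sx) JY) I);
    last by move=> i; apply: wgt_sum.
  rewrite !big_distrr /=; apply: eq_bigr => FY _; by rewrite !mulrA.
rewrite (eq_bigr _ (fun FX _ => HY FX)) -big_distrr /=; congr (_ * _).
rewrite (@marg R _ _ (fun S J => wgt l S J) (fun JX => \sum_JY wgt l.+1 I JY * G A JX JY) Sx);
  last by move=> i; apply: wgt_sum => //; exact: ltnW.
apply: eq_bigr => JX _; rewrite big_distrr /=; apply: eq_bigr => JY _; by rewrite mulrA.
Qed.

Lemma Cnz j : ('C(d, js j)%:R : R) != 0.
Proof. by rewrite pnatr_eq0 -lt0n bin_gt0 js_led. Qed.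

Lemma M2Y j (JY : chain p c) (H : {set 'I_d} -> R) : (j < c)%N ->
  \sum_(I : {set 'I_d} | #|I| == js j) ('C(d, js j)%:R)^-1 * (wgt j I JY * H I)
  = zeta R JY * H (Jc JY j).
Proof.
move=> jc; case/boolP: (chain_ok JY) => Hok; last first.
  rewrite /zeta (negbTE Hok) mul0r big1 // => I HI.
  by rewrite /wgt HI /zeta (negbTE Hok) !mul0r mulr0.
rewrite (bigD1 (Jc JY j)) /=; last by rewrite chain_ok_card.
rewrite big1 ?addr0.
  rewrite /wgt chain_ok_card // eqxx eqxx mulr1.
  by rewrite [zeta R _ * _]mulrC -mulrA mulKf ?Cnz.
move=> I /andP[HI Hne]; rewrite /wgt HI eq_sym (negbTE Hne).
by rewrite !(mulr0, mul0r).
Qed.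

Lemma M2X (JX : chain p c) (H : {ffun 'I_d -> bool} -> R) : (l < c)%N ->
  \sum_(x : {ffun 'I_d -> bool} | #|[set i | x i]| == js l)
     ('C(d, js l)%:R)^-1 * (wgt l [set i | x i] JX * H x)
  = zeta R JX * H (xof JX).
Proof.
move=> lc.
have Sx : [set i | xof JX i] = Jc JX l by apply/setP => i; rewrite inE ffunE.
case/boolP: (chain_ok JX) => Hok; last first.
  rewrite /zeta (negbTE Hok) mul0r big1 // => x Hx.
  by rewrite /wgt Hx /zeta (negbTE Hok) !mul0r mulr0.
rewrite (bigD1 (xof JX)) /=; last by rewrite Sx chain_ok_card.
rewrite big1 ?addr0.
  rewrite /wgt Sx chain_ok_card // eqxx eqxx mulr1.
  by rewrite [zeta R _ * _]mulrC -mulrA mulKf ?Cnz.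
move=> x /andP[Hx Hne]; rewrite /wgt Hx.
have -> : (Jc JX l == [set i | x i]) = false.
  apply/negbTE; apply: contra Hne => /eqP E; apply/eqP/ffunP => i.
  by rewrite ffunE E inE.
by rewrite !(mulr0, mul0r).
Qed.

Lemma distr3 (A B C : finType) (a : R) (b : A -> R) (T : A -> B -> C -> R) :
  a * (\sum_(x : A) b x * \sum_(y : B) \sum_(z : C) T x y z) =
  \sum_(x : A) \sum_(y : B) \sum_(z : C) a * (b x * T x y z).
Proof.
rewrite big_distrr; apply: eq_bigr => x _ /=.
rewrite big_distrr /= big_distrr; apply: eq_bigr => y _ /=.
rewrite big_distrr /= big_distrr; apply: eq_bigr => z _ /=. by [].
Qed.

Lemma Ident D (phi : {ffun 'I_d -> bool} -> {set 'I_d} -> option 'I_d -> R) :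
  (0 < c)%N -> (l.+1 < c)%N ->
  \sum_(x : {ffun 'I_d -> bool} | #|[set i | x i]| == js l)
   \sum_(I : {set 'I_d} | #|I| == js l.+1) \sum_(P : rmi_pair d s)
     ('C(d, js l)%:R)^-1 * ('C(d, js l.+1)%:R)^-1 * Pi D P * phi x I (rmi_out P x I)
  = \sum_A D A * \sum_JX \sum_JY zeta R JX * zeta R JY *
      phi (xof JX) (Jc JY l.+1) (bobout A JY (Jc JY l.+1) (A.1 (chain_sum JX))).
Proof.
move=> c0 lc.
pose c1 : R := ('C(d, js l)%:R)^-1; pose c2 : R := ('C(d, js l.+1)%:R)^-1.
pose G x I A JX JY := phi x I (bobout A JY I (A.1 (chain_sum JX))).
have step1 : forall x I,
  \sum_(P : rmi_pair d s) c1 * c2 * Pi D P * phi x I (rmi_out P x I)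
  = c1 * c2 * \sum_A D A * \sum_JX \sum_JY wgt l [set i | x i] JX * wgt l.+1 I JY * G x I A JX JY.
  move=> x I; rewrite -(coin_sum D (G x I)) //.
  under eq_bigr do rewrite -mulrA.
  rewrite -big_distrr /=; congr (_ * _).
  rewrite /Pi (pushf build (cw D) (fun P => phi x I (rmi_out P x I))).
  by apply: eq_bigr => co _; rewrite rmi_outE.
rewrite (eq_bigr _ (fun x _ => eq_bigr _ (fun I _ => step1 x I))).
under eq_bigr => x _ do under eq_bigr => I _ do rewrite distr3.
under eq_bigr => x _ do rewrite exchange_big.
under eq_bigr => x _ do under eq_bigr => A _ do rewrite exchange_big.
under eq_bigr => x _ do under eq_bigr => A _ do under eq_bigr => JX _ do rewrite exchange_big.
rewrite exchange_big.
under eq_bigr => A _ do rewrite exchange_big.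
under eq_bigr => A _ do under eq_bigr => JX _ do rewrite exchange_big.
have E : forall A JX JY, zeta R JX * zeta R JY *
      phi (xof JX) (Jc JY l.+1) (bobout A JY (Jc JY l.+1) (A.1 (chain_sum JX))) =
    \sum_(x : {ffun 'I_d -> bool} | #|[set i | x i]| == js l) c1 * (wgt l [set i | x i] JX *
       \sum_(I : {set 'I_d} | #|I| == js l.+1) c2 * (wgt l.+1 I JY * G x I A JX JY)).
  move=> A JX JY.
  under eq_bigr => x _ do rewrite (M2Y JY (fun I => G x I A JX JY)) //.
  by rewrite (M2X JX (fun x => zeta R JY * G x (Jc JY l.+1) A JX JY)) ?mulrA //; exact: ltnW.
apply: eq_bigr => A _; rewrite big_distrr /=; apply: eq_bigr => JX _.
rewrite big_distrr /=; apply: eq_bigr => JY _.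
rewrite E big_distrr /=; apply: eq_bigr => x _.
rewrite !big_distrr /=; apply: eq_bigr => I _.
rewrite /=; ring.
Qed.

End Main.

Section Final.
Variables (R : realType) (p c s : nat).
Local Notation d := (dimd p).
Local Notation js := (jsize p c).
Local Open Scope ring_scope.

Lemma mu_ge (J : chain p c) : zeta R J <= mu R (chain_sum J).
Proof.
rewrite /mu (bigD1 J) //= lerDl; apply: sumr_ge0 => J' _; exact: zeta_ge0.
Qed.

Lemma mu_push (D : cert_pair p c s -> R) (f : cert_pair p c s -> point p c -> point p c -> R) :
  \sum_(x : point p c) \sum_(y : point p c) \sum_(A : cert_pair p c s)
     mu R x * mu R y * D A * f A x y =
  \sum_(JX : chain p c) \sum_(JY : chain p c) zeta R JX * zeta R JY *
     \sum_(A : cert_pair p c s) D A * f A (chain_sum JX) (chain_sum JY).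
Proof.
transitivity (\sum_(x : point p c) mu R x * \sum_(y : point p c) mu R y *
     \sum_(A : cert_pair p c s) D A * f A x y).
  apply: eq_bigr => x _; rewrite [RHS]big_distrr /=; apply: eq_bigr => y _.
  rewrite mulrA [RHS]big_distrr /=; apply: eq_bigr => A _; ring.
rewrite /mu (pushf (@chain_sum p c) (@zeta R p c)).
apply: eq_bigr => JX _; rewrite (pushf (@chain_sum p c) (@zeta R p c)) big_distrr.
apply: eq_bigr => JY _ /=; by rewrite mulrA.
Qed.

Lemma reord (D : cert_pair p c s -> R) (f : cert_pair p c s -> chain p c -> chain p c -> R) :
  \sum_(A : cert_pair p c s) D A * \sum_(JX : chain p c) \sum_(JY : chain p c)
     zeta R JX * zeta R JY * f A JX JY =
  \sum_(JX : chain p c) \sum_(JY : chain p c) zeta R JX * zeta R JY *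
     \sum_(A : cert_pair p c s) D A * f A JX JY.
Proof.
under eq_bigr => A _ do rewrite big_distrr /=.
rewrite exchange_big; apply: eq_bigr => JX _.
under eq_bigr => A _ do rewrite big_distrr /=.
rewrite exchange_big; apply: eq_bigr => JY _ /=.
rewrite big_distrr; apply: eq_bigr => A _ /=; ring.
Qed.

Definition lvl (A : cert_pair p c s) (x y : point p c) (j : nat) : bool :=
  if cert_run A x y is Some (_, j') then (j' : nat) == j else false.

Lemma sum_lvl A x y : (cert_run A x y != None)%:R = \sum_(j < c - 1) (lvl A x y j)%:R :> R.
Proof.
rewrite /lvl; case: (cert_run A x y) => [[i j']|]; last by rewrite big1.
rewrite (bigD1 j') //= eqxx big1 ?addr0 // => j Hj.
by move: Hj; rewrite eq_sym -val_eqE => /negbTE ->.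
Qed.

End Final.

Section Final2.
Variables (R : realType) (p c s : nat).
Local Notation d := (dimd p).
Local Notation js := (jsize p c).
Local Open Scope ring_scope.

Lemma js_formula i : ((p - 2) %/ (c - 1) * i <= p - 2)%N ->
  js i = (2 ^ (p - 2 - (p - 2) %/ (c - 1) * i))%N.
Proof.
set q := ((p - 2) %/ (c - 1))%N.
elim: i => [|i IH] H; first by rewrite muln0 subn0.
have H' : (q * i <= p - 2)%N by apply: leq_trans H; rewrite leq_mul2l leqnSn orbT.
rewrite /= IH // -expnB //; last by move: H; rewrite mulnS; lia.
congr (2 ^ _)%N; move: H; rewrite mulnS; lia.
Qed.

Lemma js_le0 i : (js i <= js 0)%N.
Proof. elim: i => // i IH; exact: leq_trans (js_le _ _ _) IH. Qed.

Lemma pw_succ (l : nat) (A : cert_pair p c s) (JX JY : chain p c) :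
  (l.+1 < c)%N -> chain_ok JY ->
  (lvl A (chain_sum JX) (chain_sum JY) l)%:R - (cert_bad A (chain_sum JX) (chain_sum JY))%:R <=
  ((if bobout l A JY (Jc JY l.+1) (A.1 (chain_sum JX)) is Some i then i \in Jc JY l.+1 else false)%:R : R).
Proof.
move=> lc okY; rewrite /lvl /cert_bad /bobout /cert_run.
case: (A.2 _) => [[i j]|]; last by rewrite /= subrr.
case: eqP => [Hj|Hj] /=; last by rewrite sub0r oppr_le0 ler0n.
case: (boolP (i \in Jc JY l.+1)) => Hi /=.
  by rewrite Hi /= lerBlDr lerDl ler0n.
have := lvl_le okY lc Hi; rewrite -Hj => HY.
have -> : (j.+1 < chain_sum JY i)%N = false by apply/negbTE; rewrite -leqNgt.
by rewrite andbF /= subrr.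
Qed.

Lemma pw_bad (l : nat) (A : cert_pair p c s) (JX JY : chain p c) :
  (l < c)%N -> chain_ok JX ->
  ((if bobout l A JY (Jc JY l.+1) (A.1 (chain_sum JX)) is Some i
      then (i \in Jc JY l.+1) && xof l JX i else false)%:R : R)
  <= (cert_bad A (chain_sum JX) (chain_sum JY))%:R.
Proof.
move=> lc okX; rewrite /cert_bad /bobout /cert_run.
case: (A.2 _) => [[i j]|] //.
case: eqP => [Hj|Hj] /=; last by rewrite ler_nat.
case: (i \in Jc JY l.+1) => /=; last first.
  by rewrite ler_nat.
rewrite ffunE; case: (boolP (i \in Jc JX l)) => Hi /=; last by rewrite andbF ler_nat.
have := lvl_ge okX lc Hi; rewrite -Hj => HX.
have -> : (chain_sum JX i < j.+1)%N = false by apply/negbTE; rewrite -leqNgt.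
by rewrite /= andbT ler_nat leq_b1.
Qed.

Lemma pw_lift (D : cert_pair p c s -> R) (f g : cert_pair p c s -> R) (JX JY : chain p c) :
  (forall A, 0 <= D A) ->
  (chain_ok JX -> chain_ok JY -> forall A, f A <= g A) ->
  zeta R JX * zeta R JY * \sum_A D A * f A <= zeta R JX * zeta R JY * \sum_A D A * g A.
Proof.
move=> D0 H.
case/boolP: (chain_ok JX) => okX; last by rewrite /zeta (negbTE okX) !mul0r.
case/boolP: (chain_ok JY) => okY; last by rewrite /zeta (negbTE okY) mulr0 !mul0r.
apply: ler_wpM2l; first by apply: mulr_ge0; apply: zeta_ge0.
apply: ler_sum => A _; apply: ler_wpM2l => //; exact: H.
Qed.

End Final2.

Local Open Scope ring_scope.
Unset Implicit Arguments.

Theorem mainTheorem8 (R : realType) (p c s : nat) (delta : R)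
  (hp : (2 <= p)%N) (hc : (2 <= c)%N)
  (hdiv : (c - 1 %| p - 2)%N) (hpos : (0 < (p - 2) %/ (c - 1))%N)
  (hd : (8 * c * (c - 1) <= dimd p)%N)
  (D : cert_pair p c s -> R)
  (hD : cert_succeeds D (1 / 8) delta)
  (hdelta : delta <= 1 / (dimd p)%:R) :
  exists k t : nat, [/\ (0 < k)%N, (0 < t)%N,
    ((dimd p)%:R / 2) `^ (1 / (c - 1)%:R) <= k%:R :> R,
    (k * t <= dimd p %/ 2)%N &
    exists Pi : rmi_pair (dimd p) s -> R,
      rmi_succeeds k t Pi (1 / (8 * c%:R)) delta].
Proof.
case: hD => [[D0 D1] [Hsucc Hbad]].
have c0 : (0 < c)%N by apply: leq_trans hc.
set q := ((p - 2) %/ (c - 1))%N.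
have qc : (q * (c - 1) = p - 2)%N by rewrite divnK.
pose Q (j : nat) := \sum_(JX : chain p c) \sum_(JY : chain p c) zeta R JX * zeta R JY *
   \sum_(A : cert_pair p c s) D A * (lvl A (chain_sum JX) (chain_sum JY) j)%:R.
have HQ : 1 / 8 <= \sum_(j < c - 1) Q j.
  move: Hsucc; rewrite (mu_push D (fun A x y => (cert_run A x y != None)%:R)).
  suff -> : \sum_(JX : chain p c) \sum_(JY : chain p c) zeta R JX * zeta R JY *
     \sum_(A : cert_pair p c s) D A * (cert_run A (chain_sum JX) (chain_sum JY) != None)%:R
     = \sum_(j < c - 1) Q j by [].
  transitivity (\sum_(JX : chain p c) \sum_(JY : chain p c) \sum_(j < c - 1) zeta R JX * zeta R JY *
     \sum_(A : cert_pair p c s) D A * (lvl A (chain_sum JX) (chain_sum JY) j)%:R).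
    apply: eq_bigr => JX _; apply: eq_bigr => JY _; rewrite -big_distrr /=; congr (_ * _).
    rewrite [RHS]exchange_big /=; apply: eq_bigr => A _.
    rewrite -big_distrr /=; congr (_ * _).
    exact: sum_lvl.
  rewrite /Q; under eq_bigr => JX _ do rewrite exchange_big.
  by rewrite exchange_big.
have c1 : (0 < c - 1)%N by rewrite subn_gt0.
have cR : (c - 1)%:R != 0 :> R by rewrite pnatr_eq0 -lt0n.
have [l Hl] : exists l : 'I_(c - 1), 1 / (8 * (c - 1)%:R) <= Q l.
  case: (boolP [exists l : 'I_(c - 1), 1 / (8 * (c - 1)%:R) <= Q l]) => [/existsP [l Hl]|/existsPn H].
    by exists l.
  have : \sum_(j < c - 1) Q j < \sum_(j < c - 1) (1 / (8 * (c - 1)%:R) : R).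
    apply: ltr_sum; first by apply/hasP; exists (Ordinal c1); rewrite ?mem_index_enum.
    by move=> j _; rewrite ltNge; exact: H j.
  rewrite sumr_const card_ord -[X in _ < X]mulr_natr.
  have -> : 1 / (8 * (c - 1)%:R) * (c - 1)%:R = 1 / 8 :> R by field.
  move: HQ; rewrite /=; lra.
have lc : (l.+1 < c)%N by have := ltn_ord l; lia.
have Hb1 : (q * l.+1 <= p - 2)%N by rewrite -qc leq_mul2l ltn_ord orbT.
have Hb0 : (q * l <= p - 2)%N by apply: leq_trans Hb1; rewrite leq_mul2l leqnSn orbT.
have jsl : (2 ^ q * jsize p c l.+1 = jsize p c l)%N.
  rewrite !js_formula // -expnD; congr (2 ^ _)%N; move: Hb1; rewrite mulnS; lia.
exists (2 ^ q)%N, (jsize p c l.+1); split.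
- by rewrite expn_gt0.
- by rewrite js_formula // expn_gt0.
- have E : (dimd p)%:R / 2 = ((2 ^ q)%:R ^+ (c - 1) : R).
    rewrite -natrX -expnM qc /dimd.
    have -> : (p - 1 = (p - 2).+1)%N by lia.
    by rewrite expnS natrM mulrAC mulfV ?mul1r // pnatr_eq0.
  rewrite E -powR_mulrn ?ler0n // -powRrM mulrCA mulrV ?unitfE // mulr1 powRr1 ?ler0n //.
- rewrite jsl; apply: leq_trans (js_le0 _ _ _) _.
  rewrite /= /dimd; have -> : (p - 1 = (p - 2).+1)%N by lia.
  by rewrite expnS mulKn.
exists (Pi l D); rewrite /rmi_succeeds jsl.
have Bbad : \sum_(JX : chain p c) \sum_(JY : chain p c) zeta R JX * zeta R JY *
     \sum_(A : cert_pair p c s) D A * (cert_bad A (chain_sum JX) (chain_sum JY))%:R <= delta.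
  apply: le_trans (_ : \sum_(JX : chain p c) \sum_(JY : chain p c) zeta R JX * zeta R JY * delta <= delta).
    apply: ler_sum => JX _; apply: ler_sum => JY _.
    case: (eqVneq (zeta R JX) 0) => [->|hx]; first by rewrite !mul0r.
    case: (eqVneq (zeta R JY) 0) => [->|hy]; first by rewrite mulr0 !mul0r.
    apply: ler_wpM2l; first by apply: mulr_ge0; apply: zeta_ge0.
    by apply: Hbad; apply: lt_le_trans (mu_ge _ _); rewrite lt_def ?hx ?hy zeta_ge0.
  have -> : \sum_(JX : chain p c) \sum_(JY : chain p c) zeta R JX * zeta R JY * delta = delta.
    under eq_bigr => JX _ do rewrite -big_distrl /= -big_distrr /= zeta_sum // mulr1.
    by rewrite -big_distrl /= zeta_sum // mul1r.
  by [].
have Hcw : \sum_(co : coin p c s) cw l D co = 1.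
  have := coin_sum (l:=l) D (fun _ _ _ => 1 : R) set0 set0 c0 lc.
  under eq_bigr do rewrite mulr1.
  move=> ->.
  rewrite -[RHS]D1; apply: eq_bigr => A _.
  under eq_bigr => JX _ do under eq_bigr => JY _ do rewrite mulr1.
  under eq_bigr => JX _ do rewrite -big_distrr /= wgt_sum // mulr1.
  by rewrite wgt_sum ?mulr1 // ltnW.
split; [split|split; [|split]].
- move=> P; apply: sumr_ge0 => co _; rewrite /cw.
  apply: mulr_ge0; first apply: mulr_ge0.
  + exact: D0.
  + apply: prodr_ge0 => S _; exact: wgt_ge0.
  + apply: prodr_ge0 => S _; exact: wgt_ge0.
- rewrite /Pi.
  transitivity (\sum_(P : rmi_pair (dimd p) s) (\sum_(co | build l co == P) cw l D co) * 1).
    by apply: eq_bigr => P _; rewrite mulr1.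
  rewrite pushf; under eq_bigr do rewrite mulr1; exact: Hcw.
- move=> P HP I m.
  case: (pickP (fun co : coin p c s => build l co == P)) => [co /eqP HcoP|H0]; last first.
    by move: HP; rewrite /Pi big_pred0 ?ltxx.
  rewrite -HcoP /= ffunE /bobout /=.
  case: (co.1.2 _) => [[i j]|] //=; by case: ifP => // /andP[].
- rewrite (Ident D (fun x I o => (if o is Some i then i \in I else false)%:R) c0 lc) /= reord.
  have E1 : \sum_(JX : chain p c) \sum_(JY : chain p c) zeta R JX * zeta R JY *
     \sum_(A : cert_pair p c s) D A * ((lvl A (chain_sum JX) (chain_sum JY) l)%:R
        - (cert_bad A (chain_sum JX) (chain_sum JY))%:R)
     = Q l - \sum_(JX : chain p c) \sum_(JY : chain p c) zeta R JX * zeta R JY *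
     \sum_(A : cert_pair p c s) D A * (cert_bad A (chain_sum JX) (chain_sum JY))%:R.
    rewrite /Q -sumrB; apply: eq_bigr => JX _; rewrite -sumrB; apply: eq_bigr => JY _.
    rewrite -mulrBr -sumrB; congr (_ * _); apply: eq_bigr => A _; by rewrite mulrBr.
  have Hmain : Q l - delta <= \sum_(JX : chain p c) \sum_(JY : chain p c) zeta R JX * zeta R JY *
        \sum_(A : cert_pair p c s) D A *
           (if bobout l A JY (Jc JY l.+1) (A.1 (chain_sum JX)) is Some i
            then i \in Jc JY l.+1 else false)%:R.
    apply: le_trans (_ : Q l - delta <= Q l - \sum_(JX : chain p c) \sum_(JY : chain p c) zeta R JX * zeta R JY *
     \sum_(A : cert_pair p c s) D A * (cert_bad A (chain_sum JX) (chain_sum JY))%:R) _.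
      by move: Bbad; lra.
    rewrite -E1; apply: ler_sum => JX _; apply: ler_sum => JY _; apply: pw_lift => // okX okY A.
    exact: pw_succ.
  apply: le_trans Hmain.
  have Ec : (c - 1)%:R = c%:R - 1 :> R by rewrite natrB.
  have cr2 : (2 : R) <= c%:R by rewrite ler_nat.
  have HdR : 8 * c%:R * (c%:R - 1) <= (dimd p)%:R :> R by rewrite -Ec -!natrM ler_nat.
  have Hpos : 0 < 8 * c%:R * (c%:R - 1) :> R.
    by apply: mulr_gt0; [apply: mulr_gt0|]; lra.
  have Hd1 : delta <= 1 / (8 * c%:R * (c%:R - 1)).
    apply: le_trans hdelta _; rewrite !div1r lef_pV2 ?posrE //; lra.
  rewrite Ec in Hl.
  have Ee : 1 / (8 * c%:R) = 1 / (8 * (c%:R - 1)) - 1 / (8 * c%:R * (c%:R - 1)) :> R.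
    by field; apply/andP; split; lra.
  rewrite Ee; lra.
- rewrite (Ident D (fun x I o => (if o is Some i then (i \in I) && x i else false)%:R) c0 lc) /= reord.
  apply: le_trans Bbad.
  apply: ler_sum => JX _; apply: ler_sum => JY _; apply: pw_lift => // okX okY A.
  exact: pw_bad (ltnW lc) okX.
Qed.
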